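(* Let $L:\mathbb{T}^d\times\mathbb{R}^d\to\mathbb{R}$ be continuous and satisfy $\lim_{|v|\to\infty}\inf_{x\in\mathbb{T}^d}L(x,v)/|v|=+\infty$, and let $\varphi:\mathbb{T}^d\to\mathbb{R}$ be Lipschitz continuous. For each $\varkappa>0$ and $x\in\mathbb{T}^d$ let $b_\varkappa[x]$, $p_\varkappa[x]$ be as in the context and choose \[\mathbbm{v}_\varkappa[x]\in\operatorname{Argmax}_{v\in\mathbb{R}^d}\big[-p_\varkappa[x]v-L(x+b_\varkappa[x],v)\big].\] Then there exists a constant $C_3$ such that $|\mathbbm{v}_\varkappa[x]|\le C_3$ for all $\varkappa>0$ and $x\in\mathbb{T}^d$.
   Context: $\mathbb{T}^d=\mathbb{R}^d/\mathbb{Z}^d$; $x+v$ is the translate of $x\in\mathbb{T}^d$ by $v\in\mathbb{R}^d$. $\varphi_\varkappa(x)=\inf\{\varphi(x+v)+\frac{1}{2\varkappa^2}|v|^2: v\in\mathbb{R}^d\}$; $b_\varkappa[x]\in\mathbb{R}^d$ is a chosen vector with $\varphi(x+b_\varkappa[x])+\frac{1}{2\varkappa^2}|b_\varkappa[x]|^2=\varphi_\varkappa(x)$, and $p_\varkappa[x]=\frac{1}{\varkappa^2}(-b_\varkappa[x])^\top$ (a row vector). *)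

(* Defs.v *)
From HB Require Import structures.
From mathcomp Require Import all_boot all_order all_algebra.
From mathcomp Require Import all_classical all_reals all_analysis.
Set Implicit Arguments. Unset Strict Implicit. Unset Printing Implicit Defensive.
Import Order.TTheory GRing.Theory Num.Theory numFieldNormedType.Exports.
Local Open Scope classical_set_scope.
Local Open Scope ring_scope.

(* Euclidean norm |v| on R^d (the library norm on 'rV is the max norm). *)
Definition enorm {R : realType} {d : nat} (v : 'rV[R]_d) : R :=
  Num.sqrt (\sum_(i < d) v ord0 i ^+ 2).

Definition dotp {R : realType} {d : nat} (p v : 'rV[R]_d) : R :=
  \sum_(i < d) p ord0 i * v ord0 i.

Definition zvec {R : realType} {d : nat} (k : 'rV[int]_d) : 'rV[R]_d :=
  map_mx (fun z : int => z%:~R) k.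

(* Functions on T^d = R^d / Z^d are represented as Z^d-Zd_periodic functions on R^d. *)
Definition Zd_periodic {R : realType} {d : nat} {T : Type} (f : 'rV[R]_d -> T) :=
  forall (x : 'rV[R]_d) (k : 'rV[int]_d), f (x + zvec k) = f x.

Definition eucl_lipschitz {R : realType} {d : nat} (f : 'rV[R]_d -> R) :=
  exists K : R, forall x y, `|f x - f y| <= K * enorm (x - y).

Definition phi_kappa {R : realType} {d : nat} (phi : 'rV[R]_d -> R) (kappa : R)
  (x : 'rV[R]_d) : R :=
  inf [set phi (x + v) + (enorm v) ^+ 2 / (2 * kappa ^+ 2) | v in [set: 'rV[R]_d]].

Definition p_kappa {R : realType} {d : nat} (b : 'rV[R]_d) (kappa : R) : 'rV[R]_d :=
  kappa ^- 2 *: (- b).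

Definition Argmax {R : realType} {d : nat} (f : 'rV[R]_d -> R) : set 'rV[R]_d :=
  [set v | forall w, f w <= f v].

(* Main.v *)
Require Import Defs.
From HB Require Import structures.
From mathcomp Require Import all_boot all_order all_algebra.
From mathcomp Require Import all_classical all_reals all_analysis.
From mathcomp Require Import ring lra.
Import Order.TTheory GRing.Theory Num.Theory numFieldNormedType.Exports.
Local Open Scope classical_set_scope.
Local Open Scope ring_scope.


Lemma amgm (R : realType) (a K k : R) : 0 < k -> a * K <= a ^+ 2 / (2 * k ^+ 2) + K ^+ 2 * k ^+ 2 / 2.
Proof.
move=> k0.
have -> : a ^+ 2 / (2 * k ^+ 2) = (a / k) ^+ 2 / 2 by field; rewrite gt_eqF.
have -> : a * K = (a / k) * (K * k) by field; rewrite gt_eqF.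
have -> : K ^+ 2 * k ^+ 2 = (K * k) ^+ 2 by rewrite exprMn.
set u := a / k; set w := K * k.
have := sqr_ge0 (u - w). nra.
Qed.
Section H.
Variables (R : realType) (d : nat).
Implicit Types (b v : 'rV[R]_d).

Lemma enorm_ge0 v : 0 <= enorm v.
Proof. exact: sqrtr_ge0. Qed.

Lemma enorm_sqr v : enorm v ^+ 2 = \sum_(i < d) v ord0 i ^+ 2.
Proof. by rewrite /enorm sqr_sqrtr // sumr_ge0 // => i _; exact: sqr_ge0. Qed.

Lemma enorm0_coef v : enorm v = 0 -> forall i, v ord0 i = 0.
Proof.
move=> h i; have h2 : \sum_(i < d) v ord0 i ^+ 2 = 0 by rewrite -enorm_sqr h expr0n.
have := psumr_eq0P (fun i _ => sqr_ge0 (v ord0 i)) h2 (i := i) isT.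
by move/eqP; rewrite sqrf_eq0 => /eqP.
Qed.

Lemma cs b v : dotp b v <= enorm b * enorm v.
Proof.
have [s0|s0] := eqVneq (enorm b) 0.
  rewrite s0 mul0r /dotp big1 // => i _; by rewrite (enorm0_coef _ s0) mul0r.
have [t0|t0] := eqVneq (enorm v) 0.
  rewrite t0 mulr0 /dotp big1 // => i _; by rewrite (enorm0_coef _ t0) mulr0.
have sp : 0 < enorm b by rewrite lt_def s0 enorm_ge0.
have tp : 0 < enorm v by rewrite lt_def t0 enorm_ge0.
have key : 2 * enorm b * enorm v * dotp b v <=
   enorm v ^+ 2 * (\sum_(i < d) b ord0 i ^+ 2) + enorm b ^+ 2 * (\sum_(i < d) v ord0 i ^+ 2).
  rewrite /dotp !mulr_sumr -big_split /=; apply: ler_sum => i _.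
  have := sqr_ge0 (enorm v * b ord0 i - enorm b * v ord0 i). nra.
rewrite -!enorm_sqr in key.
move: key sp tp; move: (enorm b) (enorm v) (dotp b v) => x y z key sp tp.
have stp : 0 < x * y by exact: mulr_gt0.
nra.
Qed.

Lemma dotp0 b : dotp b 0 = 0.
Proof. by rewrite /dotp big1 // => i _; rewrite mxE mulr0. Qed.

Lemma dotp_pk b (k : R) v : - dotp (p_kappa b k) v = k ^- 2 * dotp b v.
Proof.
rewrite /dotp /p_kappa mulr_sumr -sumrN; apply: eq_bigr => i _.
by rewrite !mxE mulrN mulNr opprK mulrA.
Qed.
End H.
Lemma L0_bounded (R : realType) (d : nat) (L : 'rV[R]_d -> 'rV[R]_d -> R) :
  (forall v, Zd_periodic (fun x => L x v)) ->
  continuous (fun xv : 'rV[R]_d * 'rV[R]_d => L xv.1 xv.2) ->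
  exists B, forall y, L y 0 <= B.
Proof.
move=> hper hc.
pose A := [set v : 'rV[R]_d | forall i, (`[0, 1]%classic : set R) (v ord0 i)].
have cA : compact A := @rV_compact R d (fun _ => `[0, 1]%classic) (fun _ => @segment_compact R 0 1).
have A0 : A !=set0.
  by exists 0 => i; rewrite /= mxE in_itv /= lexx ler01.
have cf : continuous (fun y : 'rV[R]_d => L y 0).
  move=> y.
  have h1 : {for y, continuous (fun y : 'rV[R]_d => (y, (0 : 'rV[R]_d)))}.
    exact: (cvg_pair (@cvg_id _ (nbhs y)) (cvg_cst (0 : 'rV[R]_d))).
  exact: (continuous_comp h1 (hc (y, 0))).
have [c cA' cmax] := EVT_max_rV A0 cA (continuous_subspaceT cf).
exists (L c 0) => y.
pose k : 'rV[int]_d := \row_i (- Num.floor (y ord0 i)).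
rewrite -(hper 0 y k); apply: cmax; rewrite inE => i.
rewrite /zvec !mxE /= in_itv /=; apply/andP; split.
  by rewrite mulrNz subr_ge0 floor_le.
rewrite mulrNz lerBlDl; apply: ltW; have := floorD1_gt (y ord0 i).
by rewrite intrD addrC.
Qed.

Lemma enorm0 (R : realType) (d : nat) : enorm (0 : 'rV[R]_d) = 0.
Proof. by rewrite /enorm big1 ?sqrtr0 // => i _; rewrite mxE expr0n. Qed.

Theorem proposition5 (R : realType) (d : nat)
  (L : 'rV[R]_d -> 'rV[R]_d -> R) (phi : 'rV[R]_d -> R)
  (b vv : R -> 'rV[R]_d -> 'rV[R]_d) :
  (forall v, Zd_periodic (fun x => L x v)) ->
  continuous (fun xv : 'rV[R]_d * 'rV[R]_d => L xv.1 xv.2) ->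
  (forall M : R, exists r : R, forall v, r <= enorm v ->
      forall x, M * enorm v <= L x v) ->
  Zd_periodic phi -> eucl_lipschitz phi ->
  (forall kappa, 0 < kappa -> Zd_periodic (b kappa)) ->
  (forall kappa x, 0 < kappa ->
      phi (x + b kappa x) + (enorm (b kappa x)) ^+ 2 / (2 * kappa ^+ 2)
      = phi_kappa phi kappa x) ->
  (forall kappa, 0 < kappa -> Zd_periodic (vv kappa)) ->
  (forall kappa x, 0 < kappa ->
      Argmax (fun v => - dotp (p_kappa (b kappa x) kappa) v
                       - L (x + b kappa x) v) (vv kappa x)) ->
  exists C3 : R, forall kappa x, 0 < kappa -> enorm (vv kappa x) <= C3.
Proof.
move=> hper hc hsup _ [K0 hK0] _ hb _ hv.
pose K := Num.max K0 0.
have K_ge0 : 0 <= K by rewrite le_max lexx orbT.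
have hK : forall x v, phi x - phi (x + v) <= K * enorm v.
  move=> x v; have := hK0 (x + v) x.
  rewrite addrAC subrr add0r ler_norml => /andP[h1 _].
  have : K0 * enorm v <= K * enorm v.
    by apply: ler_wpM2r; [exact: enorm_ge0 | rewrite le_max lexx].
  lra.
have [B hB] := @L0_bounded R d L hper hc.
have [r hr] := hsup (2 * K + 1).
exists (Num.max r B) => k x kp.
have k2p : 0 < k ^+ 2 by exact: exprn_gt0.
set bb := b k x.
have step1 : phi (x + bb) + enorm bb ^+ 2 / (2 * k ^+ 2) <= phi x.
  rewrite /bb hb // /phi_kappa; apply: ge_inf.
    exists (phi x - K ^+ 2 * k ^+ 2 / 2) => z [v _ <-].
    have := hK x v; have := @amgm R (enorm v) K k kp. lra.
  by exists 0 => //; rewrite addr0 enorm0 expr0n /= mul0r addr0.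
have step2 : enorm bb <= 2 * K * k ^+ 2.
  have h := hK x bb.
  have hs : enorm bb ^+ 2 <= (2 * K * k ^+ 2) * enorm bb.
    have : enorm bb ^+ 2 / (2 * k ^+ 2) <= K * enorm bb by lra.
    rewrite ler_pdivrMr ?mulr_gt0 ?ltr0n //. nra.
  have c0 : 0 <= 2 * K * k ^+ 2 by apply: mulr_ge0; [apply: mulr_ge0 | apply: ltW].
  have := @enorm_ge0 _ _ bb.
  move: hs c0; move: (enorm bb) (2 * K * k ^+ 2) => s c hs c0 s0.
  have [->|sp] := eqVneq s 0; first by [].
  have sp' : 0 < s by rewrite lt_def sp s0.
  nra.
set v := vv k x.
have hA := hv k x kp 0.
rewrite dotp0 oppr0 sub0r dotp_pk in hA.
have cs1 := @cs R d bb v.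
have hq : k ^- 2 * enorm bb <= 2 * K.
  by rewrite ler_pdivrMl // mulrC.
have h3 : k ^- 2 * dotp bb v <= (k ^- 2 * enorm bb) * enorm v.
  by rewrite -mulrA; apply: ler_wpM2l => //; rewrite invr_ge0 ltW.
have h4 : (k ^- 2 * enorm bb) * enorm v <= 2 * K * enorm v.
  by apply: ler_wpM2r => //; exact: enorm_ge0.
have hBy := hB (x + bb).
rewrite le_max; case: (lerP r (enorm v)) => hrv; last by rewrite ltW.
have h5 := hr v hrv (x + bb).
rewrite mulrDl mul1r in h5.
apply/orP; right; lra.
Qed.
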